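(* Let $\theta>1$, $r\in(\theta^{-1},\theta^{-1/2}]$ and $\beta=\frac{1-r^2\theta}{r\theta}\max\big(\frac1{1-r},\frac1{r\theta-1}\big)$. Let $(P_1,\dots,P_n)$ be a random price sequence with values in $[1,\theta]$ whose maximum $P^*$ has law $F$, and $Y$ a random prediction with law $G$ on $[1,\theta]$ (arbitrary joint law). Then \[ \frac{\mathbb{E}[\mathsf{A}^1_r(P,Y)]}{\mathbb{E}[P^*]}\ \ge\ \frac1{r\theta}-\beta\sup_{\pi\in\Pi(F,G)}\frac{\int z\,|z-y|\,\mathrm{d}\pi(z,y)}{\mathbb{E}[P^*]}, \] where $\Pi(F,G)$ is the set of couplings of $F$ and $G$.
   Context: One-max search: fix $\theta>1$. Prices $p_1,\dots,p_n\in[1,\theta]$ are revealed one at a time; the algorithm receives at the start a prediction $y\in[1,\theta]$ of the maximum price. At each step it irrevocably accepts the current price (payoff = that price) or rejects it; if nothing is accepted the payoff is $1$. Let $\varphi_r(z)=\frac{r\theta-1}{1-r}+\frac{1-r^2\theta}{1-r}\cdot\frac{z}{r\theta}$ and $\Phi^1_r(z)=\max(r\theta,\varphi_r(z))$; $\mathsf{A}^1_r$ accepts the first price $p_i\ge\Phi^1_r(y)$, and $\mathsf{A}^1_r(P,Y)$ is its payoff on the realized prices and prediction. A coupling of $F,G$ is a probability measure on $[1,\theta]^2$ with marginals $F,G$. *)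

(* Defs.v *)
From HB Require Import structures.
From mathcomp Require Import all_boot all_order all_algebra.
From mathcomp Require Import all_classical all_reals all_analysis.
Set Implicit Arguments. Unset Strict Implicit. Unset Printing Implicit Defensive.
Import Order.TTheory GRing.Theory Num.Theory.
Local Open Scope classical_set_scope.
Local Open Scope ring_scope.

Section OneMax.
Variable R : realType.

Definition varphi (theta r z : R) : R :=
  (r * theta - 1) / (1 - r) + (1 - r ^+ 2 * theta) / (1 - r) * (z / (r * theta)).

Definition Phi1 (theta r z : R) : R := Num.max (r * theta) (varphi theta r z).

Fixpoint accept_first (thr : R) (s : seq R) : R :=
  if s is p :: s' then (if thr <= p then p else accept_first thr s') else 1.

Definition A1 (theta r : R) (n : nat) (p : 'I_n -> R) (y : R) : R :=
  accept_first (Phi1 theta r y) [seq p i | i <- enum 'I_n].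

(* maximum price (the default 1 is irrelevant when n >= 1 since prices >= 1) *)
Definition maxprice (n : nat) (p : 'I_n -> R) : R := \big[Num.max/1]_(i < n) p i.

Definition couplings d (T : measurableType d) (P : probability T R)
    (X Y : T -> R) : set (probability (R * R)%type R) :=
  [set pi | forall A : set R, measurable A ->
     pi (fst @^-1` A) = P (X @^-1` A) /\ pi (snd @^-1` A) = P (Y @^-1` A)].

End OneMax.

(* Main.v *)
Require Import Defs.
From HB Require Import structures.
From mathcomp Require Import all_boot all_order all_algebra.
From mathcomp Require Import all_classical all_reals all_analysis.
From mathcomp Require Import measurable_realfun ring lra.
Import Order.TTheory GRing.Theory Num.Theory.
Local Open Scope classical_set_scope.
Local Open Scope ring_scope.

Module Helpers.
Set Implicit Arguments. Unset Strict Implicit.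

Section Helpers.
Context (R : realType) d (T : measurableType d) (P : probability T R).

Lemma bnd_int (f : T -> R) (K : R) : measurable_fun setT f ->
  (forall x, `|f x| <= K) -> P.-integrable setT (EFin \o f).
Proof.
move=> mf fK; apply: measurable_bounded_integrable => //.
  exact: (le_lt_trans (probability_le1 P measurableT) (ltry 1)).
exists K; split; first by rewrite num_real.
by move=> M KM x _ /=; apply: le_trans (fK x) (ltW KM).
Qed.

Lemma mbigmax (I : Type) (s : seq I) (F : I -> T -> R) :
  (forall i, measurable_fun setT (F i)) ->
  measurable_fun setT (fun w => \big[Num.max/1]_(i <- s) F i w).
Proof.
move=> mF; elim: s => [|i s IH].
  under eq_fun do rewrite big_nil. exact: measurable_cst.
under eq_fun do rewrite big_cons.
exact: measurable_maxr.
Qed.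

Lemma maccept (I : Type) (s : seq I) (F : I -> T -> R) (thr : T -> R) :
  (forall i, measurable_fun setT (F i)) -> measurable_fun setT thr ->
  measurable_fun setT (fun w => accept_first (thr w) [seq F i w | i <- s]).
Proof.
move=> mF mt; elim: s => [|i s IH] /=.
  exact: measurable_cst.
apply: measurable_fun_ifT => //.
exact: measurable_fun_ler.
Qed.

End Helpers.

Lemma key (R : realFieldType) (th a u s c b z y A Ph : R) :
 1 < a -> u * a = 1 -> 0 <= s -> s < 1 -> c + s * a = a -> c + s * th = th * u ->
 s <= u -> s <= b -> s * u <= b * (1 - s) ->
 Ph = Num.max a (c + s * y) -> 1 <= z -> z <= th -> 1 <= y -> y <= th ->
 (Ph <= z -> Ph <= A) -> (z < Ph -> A = 1) ->
 z * u - b * (z * `|z - y|) <= A.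
Proof.
move=> a1 ua s0 s1 ca cth su sb sub -> z1 zth y1 yth hA hB.
have b0 : 0 <= b by lra.
have u0 : 0 < u by nra.
case: (lerP (Num.max a (c + s * y)) z) => hz.
  have := hA hz; rewrite ge_max => /andP[_ hc].
  case: (lerP z y) => zy.
    have : 0 <= b * (z * (y - z)) by rewrite mulr_ge0 // mulr_ge0; lra.
    nra.
  have h1 : s * (z - y) <= b * (z - y) by rewrite ler_pM2r; lra.
  have h2 : b * (z - y) <= b * (z * (z - y)).
    by apply: ler_wpM2l => //; rewrite ler_peMl; lra.
  nra.
have -> := hB hz.
case: (lerP z a) => za.
  have : 0 <= b * (z * `|z - y|) by rewrite mulr_ge0 // mulr_ge0 //; lra.
  nra.
move: hz; rewrite lt_max (ltNge z a) (ltW za) /= => hz.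
have h1 : (1 - s) * (z - a) < s * (y - z) by nra.
have yz : 0 < y - z by nra.
rewrite ltr0_norm; last lra.
have h2 : u * (z - a) <= b * (y - z).
  have : (1 - s) * (u * (z - a)) <= (1 - s) * (b * (y - z)) by nra.
  rewrite ler_pM2l; lra.
have h3 : b * (y - z) <= b * (z * (y - z)).
  by apply: ler_wpM2l => //; rewrite ler_peMl; lra.
have h4 : u * (z - a) = z * u - 1 by rewrite mulrBr ua mulrC.
rewrite opprB; lra.
Qed.

Section Pointwise.
Context (R : realType).

Lemma af_has (thr : R) (s : seq R) : has (fun x => thr <= x) s ->
  thr <= accept_first thr s.
Proof.
elim: s => [|x s IH] //=; case: ifP => // _ /= h; exact: IH.
Qed.

Lemma af_nhas (thr : R) (s : seq R) : ~~ has (fun x => thr <= x) s ->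
  accept_first thr s = 1.
Proof.
elim: s => [|x s IH] //=; rewrite negb_or => /andP[/negbTE -> h]; exact: IH.
Qed.

Lemma af_bnd (thr th : R) (s : seq R) : 1 <= th -> all (fun x => 1 <= x <= th) s ->
  1 <= accept_first thr s <= th.
Proof.
move=> th1; elim: s => [|x s IH] /=; first by rewrite lexx th1.
by move=> /andP[hx hs]; case: ifP => // _; exact: IH.
Qed.

Lemma mp_ge n (q : 'I_n -> R) i : q i <= maxprice q.
Proof. by rewrite /maxprice (bigD1 i) //= le_max lexx. Qed.

Lemma mp_cases n (q : 'I_n -> R) : maxprice q = 1 \/ exists i, maxprice q = q i.
Proof.
rewrite /maxprice; apply: (big_ind (fun x => x = 1 \/ exists i, x = q i)).
- by left.
- move=> x y hx hy; rewrite /Num.max; case: ifP => _; [exact: hy|exact: hx].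
- by move=> i _; right; exists i.
Qed.

Lemma mp_bnd n (q : 'I_n -> R) th : 1 <= th -> (forall i, 1 <= q i <= th) ->
  1 <= maxprice q <= th.
Proof.
move=> th1 hq; case: (mp_cases q) => [->|[i ->]]; first by rewrite lexx th1.
exact: hq.
Qed.

End Pointwise.

Lemma pointwise (R : realType) (th r y : R) n (q : 'I_n -> R) :
  1 < th -> 0 < r -> r < 1 -> 1 < r * th -> r ^+ 2 * th <= 1 ->
  (forall i, 1 <= q i <= th) -> 1 <= y <= th ->
  maxprice q * (r * th)^-1 - (1 - r ^+ 2 * th) / (r * th) *
              Num.max (1 - r)^-1 (r * th - 1)^-1 * (maxprice q * `|maxprice q - y|)
  <= A1 th r q y.
Proof.
move=> th1 r0 r1 rth r2 hq /andP[y1 yth].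
have /andP[z1 zth] := mp_bnd (ltW th1) hq.
set z := maxprice q.
set b := _ * Num.max _ _.
have th0 : th != 0 by rewrite gt_eqF // (lt_trans _ th1).
have rn0 : r != 0 by rewrite gt_eqF.
have r10 : 1 - r != 0 by rewrite subr_eq0 eq_sym lt_eqF.
have rt0 : r * th != 0 by rewrite gt_eqF // (lt_trans _ rth).
have rt10 : r * th - 1 != 0 by rewrite subr_eq0 gt_eqF.
set u := (r * th)^-1.
set s := (1 - r ^+ 2 * th) / (1 - r) / (r * th).
set c := (r * th - 1) / (1 - r).
have i1 : 0 < (1 - r)^-1 by rewrite invr_gt0 subr_gt0.
have i2 : 0 < (r * th - 1)^-1 by rewrite invr_gt0 subr_gt0.
have u0 : 0 < u by rewrite invr_gt0 (lt_trans _ rth).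
have k0 : 0 <= 1 - r ^+ 2 * th by rewrite subr_ge0.
have Hs1 : 1 - s = (r * th - 1) * (1 - r)^-1 * u.
  by rewrite /s /u; field; rewrite ?th0 ?rn0 ?r10 //.
have s0 : 0 <= s by rewrite /s !divr_ge0 // ?subr_ge0 ?(ltW r1) // ltW // (lt_trans _ rth).
apply: (@key R th (r * th) u s c b z y (A1 th r q y) (Phi1 th r y)).
- by [].
- by rewrite /u mulVf.
- by [].
- suff : 0 < 1 - s by lra.
  by rewrite Hs1 !mulr_gt0 // subr_gt0.
- by rewrite /c /s; field; rewrite ?th0 ?rn0 ?r10 //.
- by rewrite /c /s /u; field; rewrite ?th0 ?rn0 ?r10 //.
- rewrite /s -[X in _ <= X]mul1r ler_pM2r; last exact: u0.
  rewrite ler_pdivrMr ?subr_gt0 // mul1r.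
  suff : r <= r ^+ 2 * th by lra.
  by rewrite expr2 -mulrA ler_peMr // ltW.
- have -> : s = (1 - r ^+ 2 * th) / (r * th) * (1 - r)^-1.
    by rewrite /s; field; rewrite ?th0 ?rn0 ?r10 //.
  rewrite /b ler_wpM2l ?le_max ?lexx //.
  by rewrite divr_ge0 // ltW // (lt_trans _ rth).
- have -> : s * u = (1 - r ^+ 2 * th) / (r * th) * (r * th - 1)^-1 * (1 - s).
    by rewrite Hs1 /s /u; field; rewrite ?th0 ?rn0 ?r10 ?rt10 //.
  rewrite /b ler_wpM2r //.
    by rewrite Hs1 !mulr_ge0 // ?subr_ge0 ?(ltW rth) // ltW.
  rewrite ler_wpM2l ?le_max ?lexx ?orbT //.
  by rewrite divr_ge0 // ltW // (lt_trans _ rth).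
- rewrite /Phi1 /varphi; congr (Num.max _ _); rewrite /c /s; field; rewrite ?th0 ?rn0 ?r10 //.
- exact: z1.
- exact: zth.
- exact: y1.
- exact: yth.
- move=> hz; apply: af_has.
  have zn1 : z != 1.
    apply: contraTneq hz => ->; rewrite -ltNge /Phi1 lt_max.
    by rewrite rth.
  case: (mp_cases q) => [/eqP|[i hi]]; first by rewrite (negbTE zn1).
  apply/hasP; exists (q i); first by apply: map_f; rewrite mem_enum.
  by rewrite -hi.
- move=> hz; apply: af_nhas; apply/hasPn => x /mapP[i _ ->].
  by rewrite -ltNge (le_lt_trans (mp_ge q i)).
Qed.

End Helpers.
Import Helpers.

Theorem corollary9 (R : realType) (theta r : R) (n : nat)
  (d : measure_display) (T : measurableType d) (P : probability T R)
  (p : 'I_n -> T -> R) (Y : T -> R) :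
  1 < theta ->
  theta^-1 < r -> r <= Num.sqrt (theta^-1) ->
  (forall i, measurable_fun setT (p i)) ->
  measurable_fun setT Y ->
  (forall i w, 1 <= p i w <= theta) ->
  (forall w, 1 <= Y w <= theta) ->
  let beta := (1 - r ^+ 2 * theta) / (r * theta) *
              Num.max (1 - r)^-1 (r * theta - 1)^-1 in
  let Pstar := fun w => maxprice (fun i => p i w) in
  let EP := Rintegral P setT Pstar in
  Rintegral P setT (fun w => A1 theta r (fun i => p i w) (Y w)) / EP >=
    (r * theta)^-1 -
    beta * sup [set Rintegral pi setT (fun z : R * R => z.1 * `|z.1 - z.2|)
               | pi in couplings P Pstar Y] / EP.
Proof.
move=> th1 rlo rhi mp mY pb Yb; cbv zeta.
set beta := (1 - r ^+ 2 * theta) / (r * theta) * Num.max (1 - r)^-1 (r * theta - 1)^-1.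
set Pstar := fun w : T => maxprice (p^~ w).
set EP := Rintegral P setT Pstar.
have th0 : 0 < theta by apply: lt_trans th1.
have r0 : 0 < r by apply: lt_trans rlo; rewrite invr_gt0.
have rth : 1 < r * theta.
  by move: rlo; rewrite -[theta^-1]mul1r ltr_pdivrMr.
have r2 : r ^+ 2 * theta <= 1.
  have h : r ^+ 2 <= theta^-1.
    have s0 : 0 <= Num.sqrt (theta^-1) by [].
    have := ler_pM (ltW r0) (ltW r0) rhi rhi.
    by rewrite -expr2 -[_ * _]expr2 sqr_sqrtr // invr_ge0 ltW.
  by move: h; rewrite -[theta^-1]mul1r ler_pdivlMr.
have r1 : r < 1 by nra.
have b0 : 0 <= beta.
  apply: mulr_ge0.
    by apply: divr_ge0; [rewrite subr_ge0 | apply: ltW; apply: lt_trans rth].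
  by rewrite le_max invr_ge0 subr_ge0 ltW.
set u := (r * theta)^-1.
have u0 : 0 < u by rewrite invr_gt0 (lt_trans _ rth).
have mPs : measurable_fun setT Pstar.
  by rewrite /Pstar /maxprice; apply: mbigmax.
have mPhi : measurable_fun setT (fun w => Phi1 theta r (Y w)).
  rewrite /Phi1 /varphi.
  apply: (measurable_maxr (f := cst (r * theta))); first exact: measurable_cst.
  apply: measurable_funD; first exact: measurable_cst.
  apply: measurable_funM; first exact: measurable_cst.
  apply: measurable_funM => //; exact: measurable_cst.
pose A := fun w => A1 theta r (fun i => p i w) (Y w).
have mA : measurable_fun setT A.
  by rewrite /A /A1; apply: maccept.
pose Df := fun w => Pstar w * `|Pstar w - Y w|.
have mD : measurable_fun setT Df.
  apply: measurable_funM => //.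
  apply: measurableT_comp => //; exact: measurable_funB.
have Pb w : 1 <= Pstar w <= theta by apply: mp_bnd => //; exact: ltW.
have Ab w : 1 <= A w <= theta.
  apply: af_bnd; first exact: ltW.
  by apply/allP => x /mapP[i _ ->]; exact: pb.
have Db w : `|Df w| <= theta * theta.
  have /andP[p1 p2] := Pb w; have /andP[y1 y2] := Yb w.
  rewrite /Df ger0_norm ?mulr_ge0 //; last by apply: le_trans p1.
  apply: ler_pM => //; first by apply: le_trans p1.
  case: (lerP (Pstar w) (Y w)) => _; lra.
have iA : P.-integrable setT (EFin \o A).
  apply: (@bnd_int _ _ _ _ _ (theta)) => // w; have /andP[a1 a2] := Ab w.
  by rewrite ger0_norm // (le_trans _ a1).
have iPs : P.-integrable setT (EFin \o Pstar).
  apply: (@bnd_int _ _ _ _ _ (theta)) => // w; have /andP[a1 a2] := Pb w.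
  by rewrite ger0_norm // (le_trans _ a1).
have iD : P.-integrable setT (EFin \o Df) by apply: (@bnd_int _ _ _ _ _ (theta * theta)).
have iPu : P.-integrable setT (EFin \o (fun w => Pstar w * u)).
  apply: (@bnd_int _ _ _ _ _ (theta * u)); first exact: measurable_funM.
  move=> w; have /andP[a1 a2] := Pb w.
  by rewrite normrM (gtr0_norm u0) ger0_norm ?ler_pM2r // (le_trans _ a1).
have iBD : P.-integrable setT (EFin \o (fun w => beta * Df w)).
  apply: (@bnd_int _ _ _ _ _ (beta * (theta * theta))); first exact: measurable_funM.
  by move=> w; rewrite normrM (ger0_norm b0); exact: (@ler_wpM2l _ beta b0 _ _ (Db w)).
have h1 : EP * u - beta * Rintegral P setT Df <= Rintegral P setT A.
  rewrite -RintegralZr // -RintegralZl // -RintegralB //.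
  apply: le_Rintegral => //.
    apply: (@bnd_int _ _ _ _ _ (theta * u + beta * (theta * theta))).
      by apply: measurable_funB; apply: measurable_funM.
    move=> w; apply: le_trans (ler_normB _ _) _; apply: lerD.
      have /andP[a1 a2] := Pb w.
      by rewrite normrM (gtr0_norm u0) ger0_norm ?ler_pM2r // (le_trans _ a1).
    by rewrite normrM (ger0_norm b0); exact: (@ler_wpM2l _ beta b0 _ _ (Db w)).
  move=> w _; exact: pointwise.
have EP1 : 1 <= EP.
  have -> : 1 = Rintegral P setT (fun=> 1 : R).
    rewrite Rintegral_cst // mul1r [X in fine X](_ : _ = 1%E) //.
    exact: probability_setT.
  apply: le_Rintegral => //.
    apply: (@bnd_int _ _ _ _ _ 1); first exact: measurable_cst.
    by move=> _; rewrite normr1.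
  by move=> w _; have /andP[] := Pb w.
pose F := fun z : R * R => z.1 * `|z.1 - z.2|.
have mF : measurable_fun setT F.
  apply: measurable_funM; first exact: measurable_fst.
  apply: measurableT_comp => //; apply: measurable_funB; [exact: measurable_fst | exact: measurable_snd].
pose S := [set Rintegral pi setT F | pi in couplings P Pstar Y].
have hS : Rintegral P setT Df <= sup S.
  pose XY := fun w => (Pstar w, Y w).
  have mXY : measurable_fun setT XY := measurable_fun_pair mPs mY.
  pose XYm : {mfun T >-> (R * R)%type} := HB.pack XY (isMeasurableFun.Build _ _ _ _ _ mXY).
  pose pi0 := distribution P XYm.
  have cpl : couplings P Pstar Y pi0 by move=> B mB; split.
  have eqI : Rintegral pi0 setT F = Rintegral P setT Df.
    rewrite /Rintegral integral_distribution //; exact/measurable_EFinP.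
  have ub : ubound S (theta * theta).
    move=> x [pi cp <-].
    pose I := [set` `[1, theta]] : set R.
    have mI : measurable I by exact: measurable_itv.
    pose K := fst @^-1` I `&` snd @^-1` I.
    have mK : measurable K.
      apply: measurableI.
        by rewrite -[X in measurable X]setTI; apply: measurable_fst => //; exact: measurable_itv.
      by rewrite -[X in measurable X]setTI; apply: measurable_snd => //; exact: measurable_itv.
    have mIc : measurable (~` I) by exact: measurableC.
    have N1 : pi (fst @^-1` (~` I)) = 0%E.
      rewrite (proj1 (cp _ mIc)).
      rewrite (_ : Pstar @^-1` (~` I) = set0) ?measure0 //.
      apply/seteqP; split => // w /=; rewrite /I /= in_itv /= Pb //.
    have N2 : pi (snd @^-1` (~` I)) = 0%E.
      rewrite (proj2 (cp _ mIc)).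
      rewrite (_ : Y @^-1` (~` I) = set0) ?measure0 //.
      apply/seteqP; split => // w /=; rewrite /I /= in_itv /= Yb //.
    have mN1 : measurable (fst @^-1` (~` I) : set (R * R)).
      by rewrite -[X in measurable X]setTI; apply: measurable_fst.
    have mN2 : measurable (snd @^-1` (~` I) : set (R * R)).
      by rewrite -[X in measurable X]setTI; apply: measurable_snd.
    have NK : pi (~` K) = 0%E.
      have -> : ~` K = fst @^-1` (~` I) `|` snd @^-1` (~` I).
        by rewrite /K setCI.
      apply/eqP; rewrite -measure_le0.
      apply: le_trans (measureU2 _ mN1 mN2) _.
      rewrite [X in (X + _)%E](_ : _ = 0%E); last exact: N1.
      rewrite [X in (_ + X)%E](_ : _ = 0%E); last exact: N2.
      by rewrite adde0.
    pose G := fun z => F z * (\1_K z : R).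
    have mG : measurable_fun setT G.
      by apply: measurable_funM => //; exact: measurable_indic.
    have eFG : Rintegral pi setT F = Rintegral pi setT G.
      rewrite /Rintegral; congr fine; apply: ae_eq_integral => //.
      - exact/measurable_EFinP.
      - exact/measurable_EFinP.
      exists (~` K); split => //.
      + exact: measurableC.
      move=> z /= hz Kz; apply: hz => _.
      by rewrite /G indicE mem_set ?mulr1.
    have Gb z : 0 <= G z <= theta * theta.
      rewrite /G indicE; case: (boolP (z \in K)) => [/set_mem Kz|_] /=; last first.
        by rewrite mulr0n mulr0 lexx mulr_ge0 // ltW.
      rewrite mulr1n mulr1; case: Kz => k1 k2.
      move: k1 k2; rewrite /I /= !in_itv /= => /andP[a1 a2] /andP[c1 c2].
      rewrite /F mulr_ge0 ?(le_trans _ a1) //=.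
      apply: ler_pM => //; first by apply: le_trans a1.
      case: (lerP z.1 z.2) => _; lra.
    rewrite eFG.
    have -> : theta * theta = Rintegral pi setT (fun=> theta * theta).
      rewrite Rintegral_cst // [X in fine X](_ : _ = 1%E) ?mulr1 //.
      exact: probability_setT.
    apply: le_Rintegral => //.
    - apply: (@bnd_int _ _ _ _ _ (theta * theta)) => // z.
      by have /andP[g1 g2] := Gb z; rewrite ger0_norm.
    - apply: (@bnd_int _ _ _ _ _ (theta * theta)); first exact: measurable_cst.
      by move=> _; rewrite ger0_norm // mulr_ge0 // ltW.
    - by move=> z _; have /andP[] := Gb z.
  have hsup : has_sup S.
    split; first by exists (Rintegral pi0 setT F); exists pi0.
    by exists (theta * theta).
  rewrite -eqI; apply: (sup_upper_bound hsup); by exists pi0.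
change (u - beta * sup S / EP <= Rintegral P setT A / EP).
have EP0 : 0 < EP by apply: lt_le_trans EP1.
have e1 : u - beta * sup S / EP = (EP * u - beta * sup S) / EP.
  by field; rewrite gt_eqF.
rewrite e1 ler_pM2r ?invr_gt0 //.
have := @ler_wpM2l _ beta b0 _ _ hS.
lra.
Qed.
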